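(* Let $T$ be a near-truss and let $I$ be a paragon in $T$ that is a maximal left ideal. Then the quotient near-truss $T/I$ has no ideals other than singleton sets and $T/I$ itself.
   Context: A heap is a set with a ternary operation $[-,-,-]$ satisfying $[a_1,a_2,[a_3,a_4,a_5]]=[[a_1,a_2,a_3],a_4,a_5]$ and $[a,a,b]=b=[b,a,a]$. A near-truss is a heap with an associative multiplication satisfying $a[b,c,d]=[ab,ac,ad]$. A normal sub-heap is a non-empty subset $S$ closed under $[-,-,-]$ with $[[a,e,s],a,e]\in S$ for all $a$ and $e,s\in S$; $a\sim_S b$ iff $[a,b,s]\in S$ for some (equivalently all) $s\in S$. A sub-heap $S$ is closed if $[ts',ts,s]\in S$ and $[s't,st,s]\in S$ for all $s,s'\in S$, $t$. A paragon is a non-empty normal sub-heap $P$ all of whose $\sim_P$-classes are closed; then $T/P$ is a near-truss with $\bar a\bar b=\overline{ab}$. A left ideal is a normal sub-heap $I$ with $ti\in I$ for all $t$, $i\in I$; an ideal additionally satisfies $it\in I$. A left ideal $I\neq T$ is maximal if it is not contained in any left ideal other than itself and $T$. *)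

(* Defs.v *)
From Stdlib Require Import ClassicalEpsilon.

Set Implicit Arguments.

Section NearTruss.
Variable T : Type.
Variable h : T -> T -> T -> T.
Variable mul : T -> T -> T.

Definition is_heap : Prop :=
  (forall a1 a2 a3 a4 a5, h a1 a2 (h a3 a4 a5) = h (h a1 a2 a3) a4 a5) /\
  (forall a b, h a a b = b) /\ (forall a b, h b a a = b).

Definition is_near_truss : Prop :=
  is_heap /\
  (forall a b c, mul a (mul b c) = mul (mul a b) c) /\
  (forall a b c d, mul a (h b c d) = h (mul a b) (mul a c) (mul a d)).

Definition heap_closed (S : T -> Prop) : Prop :=
  forall a b c, S a -> S b -> S c -> S (h a b c).

Definition is_subheap (S : T -> Prop) : Prop :=
  (exists s, S s) /\ heap_closed S.

Definition is_normal_subheap (S : T -> Prop) : Prop :=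
  is_subheap S /\
  (forall a e s, S e -> S s -> S (h (h a e s) a e)).

Definition heap_rel (S : T -> Prop) (a b : T) : Prop :=
  exists s, S s /\ S (h a b s).

Definition is_closed_subheap (S : T -> Prop) : Prop :=
  is_subheap S /\
  (forall s s' t, S s -> S s' ->
     S (h (mul t s') (mul t s) s) /\ S (h (mul s' t) (mul s t) s)).

Definition is_paragon (P : T -> Prop) : Prop :=
  is_normal_subheap P /\
  (forall a, is_closed_subheap (heap_rel P a)).

Definition is_left_ideal (I : T -> Prop) : Prop :=
  is_normal_subheap I /\ (forall t i, I i -> I (mul t i)).

Definition is_ideal (I : T -> Prop) : Prop :=
  is_left_ideal I /\ (forall t i, I i -> I (mul i t)).

Definition is_maximal_left_ideal (I : T -> Prop) : Prop :=
  is_left_ideal I /\ (exists t, ~ I t) /\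
  (forall J, is_left_ideal J -> (forall x, I x -> J x) ->
     (forall x, J x <-> I x) \/ (forall x, J x)).

End NearTruss.

Section Quotient.
Variable T : Type.
Variable h : T -> T -> T -> T.
Variable mul : T -> T -> T.
Variable P : T -> Prop.

Definition qclass (a : T) : T -> Prop := heap_rel h P a.

Definition quot : Type := { A : T -> Prop | exists a, A = qclass a }.

Definition qcl (a : T) : quot := exist _ (qclass a) (ex_intro _ a eq_refl).

Definition qrep (A : quot) : T := proj1_sig (constructive_indefinite_description _ (proj2_sig A)).

(* operations on representatives: [ā,b̄,c̄] = class of [a,b,c], ā b̄ = class of ab
   (well defined when P is a paragon) *)
Definition qheap (A B C : quot) : quot := qcl (h (qrep A) (qrep B) (qrep C)).
Definition qmul (A B : quot) : quot := qcl (mul (qrep A) (qrep B)).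

End Quotient.

Arguments qclass {T} h P a.
Arguments quot {T} h P.
Arguments qcl {T} h P a.
Arguments qrep {T} h P A.
Arguments qheap {T} h P A B C.
Arguments qmul {T} h mul P A B.

(* Main.v *)
Require Import Defs.
From Stdlib Require Import ClassicalEpsilon ProofIrrelevance FunctionalExtensionality PropExtensionality.

Theorem lemma3p23 (T : Type) (h : T -> T -> T -> T) (mul : T -> T -> T)
  (HT : is_near_truss h mul) (I : T -> Prop)
  (HP : is_paragon h mul I) (HI : is_maximal_left_ideal h mul I) :
  forall J : quot h I -> Prop,
    is_ideal (qheap h I) (qmul h mul I) J ->
    (exists q, forall x, J x <-> x = q) \/ (forall x, J x).
Proof.
  destruct HT as [[hA [hC1 hC2]] [mA mD]].
  assert (R1: forall a b c d e, h (h a b c) d e = h a b (h c d e))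
    by (intros; symmetry; apply hA).
  assert (C3: forall a b c x, h a b (h b c x) = h a c x)
    by (intros; rewrite hA, hC2; reflexivity).
  assert (R2: forall a b c d e, h a (h b c d) e = h a d (h c b e)).
  { intros a b c d e.
    assert (X: h (h a d c) b (h b c d) = a)
      by (rewrite hA, hC2, <- hA, hC1, hC2; reflexivity).
    rewrite hA.
    transitivity (h (h (h a d c) b (h b c d)) (h b c d) e).
    - rewrite X; reflexivity.
    - rewrite <- hA, hC1; reflexivity. }
  Ltac hnorm R1 R2 C1 C2 C3 :=
    repeat progress rewrite ?R1, ?R2, ?C1, ?C2, ?C3; reflexivity.
  destruct HP as [_ Hpar].
  destruct HI as [[[[[i0 Ii0] Icl] Inorm] Ileft] [_ Imax]].
  set (rel := heap_rel h I).
  assert (relall: forall a b s, rel a b -> I s -> I (h a b s)).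
  { intros a b s [s0 [Is0 H]] Is.
    replace (h a b s) with (h (h a b s0) s0 s) by hnorm R1 R2 hC1 hC2 C3.
    apply Icl; auto. }
  assert (relI: forall x y, I x -> I y -> rel x y).
  { intros x y Ix Iy. exists x; split; auto. }
  assert (refl: forall a, rel a a).
  { intros a; exists i0; split; auto. rewrite hC1; auto. }
  assert (sym: forall a b, rel a b -> rel b a).
  { intros a b [s [Is H]]. exists s; split; auto.
    replace (h b a s) with (h s (h a b s) s) by hnorm R1 R2 hC1 hC2 C3.
    apply Icl; auto. }
  assert (trans: forall a b c, rel a b -> rel b c -> rel a c).
  { intros a b c Hab Hbc. exists i0; split; auto.
    replace (h a c i0) with (h (h a b i0) i0 (h b c i0)) by hnorm R1 R2 hC1 hC2 C3.
    apply Icl; auto. }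
  assert (cong3: forall a a' b b' c c', rel a a' -> rel b b' -> rel c c' ->
            rel (h a b c) (h a' b' c')).
  { intros a a' b b' c c' Ha Hb Hc.
    apply trans with (h a' b c).
    { exists i0; split; auto.
      replace (h (h a b c) (h a' b c) i0) with (h a a' i0) by hnorm R1 R2 hC1 hC2 C3.
      auto. }
    apply trans with (h a' b' c).
    { exists i0; split; auto.
      replace (h (h a' b c) (h a' b' c) i0) with
        (h (h (h a' b' i0) i0 (h b' b i0)) (h a' b' i0) i0) by hnorm R1 R2 hC1 hC2 C3.
      apply Inorm; auto. }
    { exists i0; split; auto.
      replace (h (h a' b' c) (h a' b' c') i0) with
        (h (h (h a' b' i0) i0 (h c c' i0)) (h a' b' i0) i0) by hnorm R1 R2 hC1 hC2 C3.
      apply Inorm; auto. } }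
  assert (congm: forall a a' b b', rel a a' -> rel b b' -> rel (mul a b) (mul a' b')).
  { intros a a' b b' Ha Hb.
    apply trans with (mul a' b).
    { destruct (Hpar a) as [_ Hc].
      destruct (Hc a a' b (refl a) Ha) as [_ [s0 [Is0 H]]].
      exists s0; split; auto.
      replace (h (mul a b) (mul a' b) s0) with
        (h a (h (mul a' b) (mul a b) a) s0) by hnorm R1 R2 hC1 hC2 C3. auto. }
    { destruct (Hpar b) as [_ Hc].
      destruct (Hc b b' a' (refl b) Hb) as [[s0 [Is0 H]] _].
      exists s0; split; auto.
      replace (h (mul a' b) (mul a' b') s0) with
        (h b (h (mul a' b') (mul a' b) b) s0) by hnorm R1 R2 hC1 hC2 C3. auto. } }
  assert (Lex: forall (A B : T -> Prop) pA pB, A = B ->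
            exist (fun A => exists a, A = qclass h I a) A pA =
            exist (fun A => exists a, A = qclass h I a) B pB).
  { intros A B pA pB E. subst B. f_equal. apply proof_irrelevance. }
  assert (L4a: forall a b, qcl h I a = qcl h I b -> rel a b).
  { intros a b E. apply (f_equal (@proj1_sig _ _)) in E. simpl in E.
    assert (qclass h I b b) by apply refl. rewrite <- E in H. exact H. }
  assert (L4b: forall a b, rel a b -> qcl h I a = qcl h I b).
  { intros a b Hab. unfold qcl. apply Lex. extensionality x.
    apply propositional_extensionality. unfold qclass. split; intro H.
    - apply trans with a; auto.
    - apply trans with b; auto. }
  assert (L3: forall q, qcl h I (qrep h I q) = q).
  { intros [A pA]. unfold qrep. simpl.
    destruct (constructive_indefinite_description _ pA) as [x Hx]. simpl.
    unfold qcl. apply Lex. symmetry; exact Hx. }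
  assert (relrep: forall a, rel (qrep h I (qcl h I a)) a).
  { intros a. apply L4a. rewrite L3. reflexivity. }
  assert (L1: forall a b c, qheap h I (qcl h I a) (qcl h I b) (qcl h I c) = qcl h I (h a b c)).
  { intros. unfold qheap. apply L4b. apply cong3; auto. }
  assert (L2: forall a b, qmul h mul I (qcl h I a) (qcl h I b) = qcl h I (mul a b)).
  { intros. unfold qmul. apply L4b. apply congm; auto. }
  intros J [[[[[s0 Js0] Jcl] Jnorm] Jleft] _].
  set (K := fun a => J (qcl h I a)).
  assert (K1: K (qrep h I s0)) by (unfold K; rewrite L3; auto).
  assert (K2: forall a b c, K a -> K b -> K c -> K (h a b c)).
  { unfold K; intros. rewrite <- L1. apply Jcl; auto. }
  assert (K3: forall a e s, K e -> K s -> K (h (h a e s) a e)).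
  { unfold K; intros. rewrite <- !L1. apply Jnorm; auto. }
  assert (K4: forall t i, K i -> K (mul t i)).
  { unfold K; intros. rewrite <- L2. apply Jleft; auto. }
  assert (K5: forall a b, rel a b -> K a -> K b).
  { unfold K; intros a b Hab Ka. rewrite <- (L4b _ _ Hab). auto. }
  set (k := qrep h I s0).
  set (e := i0).
  set (M := fun m => K (h m e k)).
  assert (ML: is_left_ideal h mul M).
  { split; [split; [split|]|].
    - exists e. unfold M. rewrite hC1. exact K1.
    - intros m1 m2 m3 H1 H2 H3. unfold M in *.
      replace (h (h m1 m2 m3) e k) with (h (h m1 e k) (h m2 e k) (h m3 e k))
        by hnorm R1 R2 hC1 hC2 C3.
      apply K2; auto.
    - intros a e' s He Hs. unfold M in *.
      replace (h (h (h a e' s) a e') e k) with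
        (h (h (h a e k) (h e' e k) (h s e k)) (h a e k) (h e' e k))
        by hnorm R1 R2 hC1 hC2 C3.
      apply K3; auto.
    - intros t m Hm. unfold M in *.
      assert (Ktk: K (mul t k)) by (apply K4; exact K1).
      assert (K (mul t (h m e k))) by (apply K4; auto).
      rewrite mD in H.
      assert (K (h (mul t m) e (mul t k))).
      { apply K5 with (h (mul t m) (mul t e) (mul t k)); auto.
        all: try (apply cong3; try apply relI; auto). }
      replace (h (mul t m) e k) with (h (h (mul t m) e (mul t k)) (mul t k) k)
        by hnorm R1 R2 hC1 hC2 C3.
      apply K2; auto. }
  assert (IM: forall x, I x -> M x).
  { intros x Ix. unfold M. apply K5 with k; [|exact K1].
    apply sym. apply trans with (h e e k).
    - apply cong3; [apply relI; auto| apply refl | apply refl].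
    - rewrite hC1; apply refl. }
  destruct (Imax M ML IM) as [HMI | HMT].
  - left. exists (qcl h I k). intros x; split; intro Hx.
    + rewrite <- (L3 x) in Hx. set (p := qrep h I x) in *.
      assert (Mp: M (h p k e)).
      { unfold M. replace (h (h p k e) e k) with p by hnorm R1 R2 hC1 hC2 C3. exact Hx. }
      apply HMI in Mp. rewrite <- (L3 x). apply L4b. exists e; split; auto.
    + subst x. exact K1.
  - right. intros x. rewrite <- (L3 x). set (p := qrep h I x).
    specialize (HMT (h p k e)). unfold M in HMT.
    replace (h (h p k e) e k) with p in HMT by hnorm R1 R2 hC1 hC2 C3. exact HMT.
Qed.
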